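(* Let $n,m\ge1$ and $P\in\mathbb{C}[x_1,\dots,x_n]$. Then $P$ is invariant under the quasi-symmetrizing action of $G_{n,m}$ (i.e. $g\bullet P=P$ for all $g\in G_{n,m}$) if and only if there exists a quasi-symmetric polynomial $Q\in\mathbb{C}[x_1,\dots,x_n]$ such that $P(x_1,\dots,x_n)=Q(x_1^m,\dots,x_n^m)$.
   Context: $G_{n,m}$ is the group of $n\times n$ matrices having exactly one non-zero entry in each row and each column, these entries being $m$-th roots of unity. For $g\in G_{n,m}$, $w(g)$ is the product of its non-zero entries, $|g|$ the permutation matrix of entrywise moduli, and $\sigma_g$ the permutation with $(x_1,\dots,x_n)\cdot{}^t|g|=(x_{\sigma_g(1)},\dots,x_{\sigma_g(n)})$. The quasi-symmetrizing action is linear and defined on monomials by: for $a_1<\dots<a_l$ and positive integers $K=(k_1,\dots,k_l)$, $g\bullet(x_{a_1}^{k_1}\cdots x_{a_l}^{k_l})=w(g)^{c(K)}x_{b_1}^{k_1}\cdots x_{b_l}^{k_l}$, where $b_1<\dots<b_l$ is the increasing rearrangement of $\sigma_g(a_1),\dots,\sigma_g(a_l)$, and $c(K)=0$ if all $k_i$ are divisible by $m$, $c(K)=1$ otherwise. For $\nu\in\mathbb{N}^n$, let $c(\nu)$ be the composition obtained by deleting the zero entries of $\nu$; a polynomial $Q$ is quasi-symmetric if the coefficients of $x^\nu$ and $x^\mu$ in $Q$ are equal whenever $c(\nu)=c(\mu)$. *)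

(* Defs.v *)
From HB Require Import structures.
From mathcomp Require Import all_boot all_order all_algebra all_field.
From mathcomp Require Import mpoly.
Set Implicit Arguments. Unset Strict Implicit. Unset Printing Implicit Defensive.
Import Order.TTheory GRing.Theory Num.Theory.
Local Open Scope ring_scope.

Definition Gnm (n m : nat) : pred 'M[algC]_n := fun g =>
  [&& [forall i, #|[set j | g i j != 0]| == 1%N],
      [forall j, #|[set i | g i j != 0]| == 1%N] &
      [forall i, forall j, (g i j != 0) ==> (g i j ^+ m == 1)]].

Definition wg n (g : 'M[algC]_n) : algC :=
  \prod_(i < n) \prod_(j < n | g i j != 0) g i j.

Definition absmx n (g : 'M[algC]_n) : 'M[algC]_n := map_mx (fun x => `|x|) g.

(* sigma_g: (x_1..x_n) *m (|g|)^T = (x_{sigma(1)},..,x_{sigma(n)}), i.e.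
   sigma_g(i) is the column of the (unique) nonzero entry of row i of |g|. *)
Definition sigma_g n (g : 'M[algC]_n) (i : 'I_n) : 'I_n :=
  odflt i [pick j | absmx g i j != 0].

Definition cK n (m : nat) (nu : 'X_{1..n}) : nat :=
  if [forall i, (nu i != 0%N) ==> (m %| nu i)%N] then 0%N else 1%N.

(* the monomial x_{b_1}^{k_1}...x_{b_l}^{k_l}, where a_1<..<a_l is the support of
   nu, k_r = nu a_r, and b_1<..<b_l is the increasing rearrangement of the s(a_r) *)
Definition qs_mono n (s : 'I_n -> 'I_n) (nu : 'X_{1..n}) : 'X_{1..n} :=
  let A := [seq a <- enum 'I_n | nu a != 0%N] in
  let B := sort (fun x y : 'I_n => (x <= y)%N) [seq s a | a <- A] in
  [multinom (if b \in B then nu (nth b A (index b B)) else 0%N) | b < n].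

Definition qs_act n (m : nat) (g : 'M[algC]_n) (P : {mpoly algC[n]}) : {mpoly algC[n]} :=
  \sum_(nu <- msupp P) (P@_nu * wg g ^+ cK m nu) *: 'X_[qs_mono (sigma_g g) nu].

Definition compo n (nu : 'X_{1..n}) : seq nat :=
  [seq nu i | i <- enum 'I_n & nu i != 0%N].

Definition quasi_symmetric n (Q : {mpoly algC[n]}) : Prop :=
  forall nu mu : 'X_{1..n}, compo nu = compo mu -> Q@_nu = Q@_mu.

(* Main.v *)
Require Import Defs.
From HB Require Import structures.
From mathcomp Require Import all_boot all_order all_algebra all_field.
From mathcomp Require Import mpoly.
From mathcomp Require Import fingroup perm.
Set Implicit Arguments. Unset Strict Implicit. Unset Printing Implicit Defensive.
Import Order.TTheory GRing.Theory Num.Theory.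

Section Combi.
Variable n : nat.
Hypothesis hn : (0 < n)%N.
Let x0 : 'I_n := Ordinal hn.
Implicit Types x nu mu : 'X_{1..n}.

Definition leo := (fun x y : 'I_n => (x <= y)%N).
Definition lto := (fun x y : 'I_n => (x < y)%N).
Definition supp (x : 'X_{1..n}) := [seq a <- enum 'I_n | x a != 0%N].
Definition mk (B : seq 'I_n) (c : seq nat) : 'X_{1..n} :=
  [multinom (if b \in B then nth 0%N c (index b B) else 0%N) | b < n].

Lemma lto_trans : transitive lto.
Proof. by move=> y x z; rewrite /lto; apply: ltn_trans. Qed.
Lemma lto_irr : irreflexive lto.
Proof. by move=> x; rewrite /lto ltnn. Qed.
Lemma leo_trans : transitive leo.
Proof. by move=> y x z; rewrite /leo; apply: leq_trans. Qed.
Lemma leo_anti : antisymmetric leo.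
Proof. by move=> x y; rewrite /leo => /anti_leq /val_inj. Qed.
Lemma leo_total : total leo.
Proof. by move=> x y; rewrite /leo leq_total. Qed.

Lemma lto_map s : sorted lto s = sorted ltn (map val s).
Proof. by rewrite sorted_map. Qed.
Lemma leo_map s : sorted leo s = sorted leq (map val s).
Proof. by rewrite sorted_map. Qed.

Lemma sorted_lto_enum : sorted lto (enum 'I_n).
Proof. by rewrite lto_map val_enum_ord iota_ltn_sorted. Qed.

Lemma sorted_lto_leo s : sorted lto s = uniq s && sorted leo s.
Proof.
by rewrite lto_map leo_map ltn_sorted_uniq_leq (map_inj_uniq val_inj).
Qed.

Lemma sorted_supp x : sorted lto (supp x).
Proof. exact: (sorted_filter lto_trans _ sorted_lto_enum). Qed.

Lemma uniq_supp x : uniq (supp x).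
Proof. by rewrite filter_uniq // enum_uniq. Qed.

Lemma mem_supp x a : (a \in supp x) = (x a != 0%N).
Proof. by rewrite mem_filter mem_enum andbT. Qed.

Lemma compoE x : compo x = map x (supp x).
Proof. by []. Qed.

Lemma size_compo x : size (compo x) = size (supp x).
Proof. by rewrite compoE size_map. Qed.

Lemma compo_nz x : all (fun e => e != 0%N) (compo x).
Proof. by apply/allP=> e /mapP [a]; rewrite mem_supp => ha ->. Qed.

Lemma map_nth_index (B : seq 'I_n) (c : seq nat) :
  uniq B -> size c = size B -> map (fun b => nth 0%N c (index b B)) B = c.
Proof.
move=> uB sz; apply: (@eq_from_nth _ 0%N); rewrite size_map // => i hi.
by rewrite (nth_map x0) // index_uniq.
Qed.

Lemma supp_mk B c : sorted lto B -> size c = size B ->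
  all (fun e => e != 0%N) c -> supp (mk B c) = B.
Proof.
move=> sB sz nz; apply: (irr_sorted_eq lto_trans lto_irr).
- exact: sorted_supp.
- exact: sB.
move=> a; rewrite mem_supp mnmE; case: ifP => // aB.
apply: (allP nz); apply: mem_nth; rewrite sz index_mem //.
Qed.

Lemma compo_mk B c : sorted lto B -> size c = size B ->
  all (fun e => e != 0%N) c -> compo (mk B c) = c.
Proof.
move=> sB sz nz; rewrite compoE supp_mk //.
have uB : uniq B by rewrite sorted_lto_leo in sB; case/andP: sB.
rewrite -[RHS](map_nth_index uB sz); apply/eq_in_map => b bB.
by rewrite mnmE bB.
Qed.

Lemma mk_supp x : mk (supp x) (compo x) = x.
Proof.
apply/mnmP=> b; rewrite mnmE; case: ifP => bs.
  by rewrite compoE (nth_map x0) ?index_mem // nth_index.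
by move: bs; rewrite mem_supp => /negbFE/eqP.
Qed.

Lemma sort_perm L x : perm_eq L (supp x) -> sort leo L = supp x.
Proof.
move=> pL; apply: (sorted_eq leo_trans leo_anti).
- exact: (sort_sorted leo_total).
- by have := sorted_supp x; rewrite sorted_lto_leo => /andP [].
by rewrite (perm_sort leo).
Qed.

Lemma qs_monoE s nu : qs_mono s nu = mk (sort leo (map s (supp nu))) (compo nu).
Proof.
apply/mnmP=> b; rewrite /qs_mono !mnmE; case: ifP => // bB.
rewrite compoE (nth_map b) //.
by move: bB; rewrite -index_mem size_sort size_map.
Qed.

Lemma qs_mono_ext s1 s2 nu : s1 =1 s2 -> qs_mono s1 nu = qs_mono s2 nu.
Proof. by move=> e; rewrite !qs_monoE (eq_map e). Qed.

Section Inj.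
Variable s : 'I_n -> 'I_n.
Hypothesis sinj : injective s.

Lemma sorted_sort_map nu : sorted lto (sort leo (map s (supp nu))).
Proof.
rewrite sorted_lto_leo sort_uniq (map_inj_uniq sinj) uniq_supp /=.
exact: (sort_sorted leo_total).
Qed.

Lemma supp_qs_mono nu : supp (qs_mono s nu) = sort leo (map s (supp nu)).
Proof.
rewrite qs_monoE supp_mk ?compo_nz ?sorted_sort_map //.
by rewrite size_sort size_map size_compo.
Qed.

Lemma compo_qs_mono nu : compo (qs_mono s nu) = compo nu.
Proof.
rewrite qs_monoE compo_mk ?compo_nz ?sorted_sort_map //.
by rewrite size_sort size_map size_compo.
Qed.

Lemma qs_mono_inj : injective (qs_mono s).
Proof.
move=> nu1 nu2 e.
have ec : compo nu1 = compo nu2 by rewrite -(compo_qs_mono nu1) e compo_qs_mono.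
have es : supp nu1 = supp nu2.
  have : perm_eq (map s (supp nu1)) (map s (supp nu2)).
    apply: (@perm_trans _ (sort leo (map s (supp nu1)))).
      by rewrite perm_sym (perm_sort leo).
    by rewrite -!supp_qs_mono e supp_qs_mono (perm_sort leo).
  move=> pe; apply: (irr_sorted_eq lto_trans lto_irr); rewrite ?sorted_supp //.
  by move=> a; rewrite -(mem_map sinj) (perm_mem pe) (mem_map sinj).
by rewrite -(mk_supp nu1) -(mk_supp nu2) es ec.
Qed.

End Inj.

Lemma qs_mono_surj s (sinj : injective s) mu : exists nu, qs_mono s nu = mu.
Proof.
pose p := perm sinj.
have pinj : injective (p^-1)%g := @perm_inj _ _.
exists (qs_mono (p^-1)%g mu).
rewrite (qs_mono_ext _ (fun i => esym (permE sinj i))) qs_monoE.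
rewrite (supp_qs_mono pinj) (compo_qs_mono pinj).
rewrite (sort_perm (x:=mu)) ?mk_supp //.
apply: (@perm_trans _ (map p (map (p^-1)%g (supp mu)))).
  by rewrite perm_map // (perm_sort leo).
by rewrite (mapK (permKV p)).
Qed.
Lemma qs_mono_match nu mu : compo nu = compo mu ->
  exists s : {perm 'I_n}, qs_mono s nu = mu.
Proof.
move=> ec.
pose L1 := supp nu ++ [seq a <- enum 'I_n | predC (fun a => nu a != 0%N) a].
pose L2 := supp mu ++ [seq a <- enum 'I_n | predC (fun a => mu a != 0%N) a].
have p1 : perm_eq L1 (enum 'I_n) by rewrite /L1 /supp perm_filterC.
have p2 : perm_eq L2 (enum 'I_n) by rewrite /L2 /supp perm_filterC.
have u1 : uniq L1 by rewrite (perm_uniq p1) enum_uniq.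
have u2 : uniq L2 by rewrite (perm_uniq p2) enum_uniq.
have m1 : forall i, i \in L1 by move=> i; rewrite (perm_mem p1) mem_enum.
have sz : size L1 = size L2 by rewrite (perm_size p1) (perm_size p2).
pose f i := nth i L2 (index i L1).
have finj : injective f.
  move=> i j; rewrite /f.
  have hi : (index i L1 < size L2)%N by rewrite -sz index_mem.
  have hj : (index j L1 < size L2)%N by rewrite -sz index_mem.
  rewrite (set_nth_default x0 i hi) (set_nth_default x0 j hj) => /eqP.
  rewrite nth_uniq // => /eqP e.
  by rewrite -(nth_index x0 (m1 i)) e nth_index.
exists (perm finj).
have szs : size (supp nu) = size (supp mu) by rewrite -!size_compo ec.
have e : map (perm finj) (supp nu) = supp mu.
  apply: (@eq_from_nth _ x0); rewrite size_map // => i hi.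
  rewrite (nth_map x0) // permE /f.
  have -> : nth x0 (supp nu) i = nth x0 L1 i by rewrite /L1 nth_cat hi.
  have hi1 : (i < size L1)%N by rewrite /L1 size_cat (leq_trans hi) ?leq_addr.
  have hi2 : (i < size L2)%N by rewrite -sz.
  rewrite index_uniq // (set_nth_default x0 _ hi2).
  by rewrite /L2 nth_cat -szs hi.
by rewrite qs_monoE e (sort_perm (perm_refl _)) ec mk_supp.
Qed.

Lemma qs_mono_id nu : qs_mono (fun i => i) nu = nu.
Proof. by rewrite qs_monoE map_id (sort_perm (perm_refl _)) mk_supp. Qed.

Section Div.
Variable m : nat.
Hypothesis hm : (0 < m)%N.

Definition dvall x := [forall i, (m %| x i)%N].
Definition mulm (k : 'X_{1..n}) : 'X_{1..n} := [multinom (k i * m)%N | i < n].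
Definition divq x : 'X_{1..n} := [multinom (x i %/ m)%N | i < n].

Lemma cKE x : cK m x = if dvall x then 0%N else 1%N.
Proof.
rewrite /cK /dvall; congr (if _ then _ else _); apply: eq_forallb => i.
by case: eqP => [->|] //=; rewrite dvdn0.
Qed.

Lemma dvall_compo x : dvall x = all (dvdn m) (compo x).
Proof.
apply/forallP/allP => [h e /mapP [a _ ->] | h i] //.
case: (eqVneq (x i) 0%N) => [->|nz]; first exact: dvdn0.
by apply: h; apply/mapP; exists i => //; rewrite mem_supp.
Qed.

Lemma mulm_inj : injective mulm.
Proof.
move=> k1 k2 /mnmP e; apply/mnmP => i; have := e i; rewrite !mnmE => /eqP.
by rewrite eqn_pmul2r // => /eqP.
Qed.

Lemma divqK x : dvall x -> mulm (divq x) = x.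
Proof.
by move=> /forallP h; apply/mnmP => i; rewrite !mnmE divnK.
Qed.

Lemma mulmK k : divq (mulm k) = k.
Proof. by apply/mnmP => i; rewrite !mnmE mulnK. Qed.

Lemma dvall_mulm k : dvall (mulm k).
Proof. by apply/forallP => i; rewrite mnmE dvdn_mull. Qed.

Lemma compo_divq x : dvall x -> compo (divq x) = map (divn^~ m) (compo x).
Proof.
move=> h; have /forallP h' := h; rewrite compoE.
have -> : supp (divq x) = supp x.
  apply: eq_filter => i; rewrite mnmE.
  by rewrite -{2}(divnK (h' i)) muln_eq0 negb_or (gtn_eqF hm) andbT.
by rewrite -map_comp; apply/eq_map => i; rewrite /= mnmE.
Qed.

Lemma compo_mulm k : compo (mulm k) = map (muln^~ m) (compo k).
Proof.
rewrite compoE; have -> : supp (mulm k) = supp k.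
  by apply: eq_filter => i; rewrite mnmE muln_eq0 negb_or (gtn_eqF hm) andbT.
by rewrite -map_comp; apply/eq_map => i; rewrite /= mnmE.
Qed.
End Div.
End Combi.

From mathcomp Require Import cyclotomic.
Open Scope ring_scope.

Section Poly.
Variables n m : nat.
Hypothesis hn : (0 < n)%N.
Hypothesis hm : (0 < m)%N.
Let x0 : 'I_n := Ordinal hn.

Definition pmx (s : {perm 'I_n}) (d : 'I_n -> algC) : 'M[algC]_n :=
  \matrix_(i, j) ((s i == j)%:R * d i).

Lemma pmx_nz s d i j : d i != 0 -> (pmx s d i j != 0) = (s i == j).
Proof. move=> h; rewrite mxE. case: (s i == j); rewrite ?mul1r ?mul0r ?eqxx //. Qed.

Lemma pmx_Gnm (s : {perm 'I_n}) (d : 'I_n -> algC) : (forall i, d i != 0) -> (forall i, d i ^+ m = 1) ->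
  pmx s d \in Gnm m.
Proof.
move=> nz dm; apply/and3P; split.
- apply/forallP => i; apply/cards1P; exists (s i); apply/setP => j.
  by rewrite !inE pmx_nz // eq_sym.
- apply/forallP => j; apply/cards1P; exists ((s^-1)%g j); apply/setP => i.
  by rewrite !inE pmx_nz // (canF_eq (permK s)).
- apply/forallP => i; apply/forallP => j; apply/implyP.
  rewrite mxE; case: (s i == j); rewrite ?mul1r ?mul0r ?eqxx //= => _.
  by apply/eqP; apply: dm.
Qed.

Lemma sigma_pmx (s : {perm 'I_n}) (d : 'I_n -> algC) : (forall i, d i != 0) -> sigma_g (pmx s d) =1 s.
Proof.
move=> nz i; rewrite /sigma_g; case: pickP => [j | none].
  by rewrite /absmx mxE normr_eq0 pmx_nz // => /eqP.
by have := none (s i); rewrite /absmx mxE normr_eq0 pmx_nz // eqxx.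
Qed.

Lemma wg_pmx (s : {perm 'I_n}) (d : 'I_n -> algC) : (forall i, d i != 0) -> wg (pmx s d) = \prod_i d i.
Proof.
move=> nz; rewrite /wg; apply: eq_bigr => i _.
rewrite (big_pred1 (s i)); first by rewrite mxE eqxx mul1r.
by move=> j; rewrite /= pmx_nz // eq_sym.
Qed.

Lemma Gnm_sigma_nz (g : 'M[algC]_n) : g \in Gnm m -> forall i, g i (sigma_g g i) != 0.
Proof.
case/and3P => /forallP hr _ _ i; have /cards1P [j hj] := hr i.
rewrite /sigma_g; case: pickP => [k | none].
  by rewrite /absmx mxE normr_eq0.
have : j \in [set j | g i j != 0] by rewrite hj set11.
by rewrite inE; have := none j; rewrite /absmx mxE normr_eq0 => ->.
Qed.

Lemma Gnm_sigma_inj (g : 'M[algC]_n) : g \in Gnm m -> injective (sigma_g g).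
Proof.
move=> hg i1 i2 e; have := hg; case/and3P => _ /forallP hc _.
have /cards1P [k hk] := hc (sigma_g g i1).
have h1 : i1 \in [set i | g i (sigma_g g i1) != 0] by rewrite inE Gnm_sigma_nz.
have h2 : i2 \in [set i | g i (sigma_g g i1) != 0] by rewrite inE e Gnm_sigma_nz.
by move: h1 h2; rewrite hk !inE => /eqP -> /eqP ->.
Qed.

Lemma mexp (P : {mpoly algC[n]}) x :
  \sum_(nu <- msupp P) P@_nu * (nu == x)%:R = P@_x.
Proof.
rewrite [in RHS](mpolyE P) raddf_sum; apply: eq_bigr => nu _ /=. by rewrite (mcoeffZ (P@_nu)) mcoeffX.
Qed.

Lemma mexp_h (P : {mpoly algC[n]}) x (h : 'X_{1..n} -> algC) :
  \sum_(nu <- msupp P) (P@_nu * h nu) * (nu == x)%:R = P@_x * h x.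
Proof.
rewrite -mexp big_distrl; apply: eq_bigr => nu _.
by case: (eqVneq nu x) => [->|_]; rewrite /= ?mulr1 ?mulr0 ?mul0r.
Qed.

Lemma coef_act (g : 'M[algC]_n) (P : {mpoly algC[n]}) nu : g \in Gnm m ->
  (qs_act m g P)@_(qs_mono (sigma_g g) nu) = P@_nu * wg g ^+ cK m nu.
Proof.
move=> hg; have sinj := Gnm_sigma_inj hg.
rewrite /qs_act raddf_sum -(mexp_h P nu (fun nu => wg g ^+ cK m nu)).
apply: eq_bigr => nu' _.
by rewrite /= mcoeffZ mcoeffX (inj_eq (qs_mono_inj hn sinj)).
Qed.

Lemma X_comp k :
  'X_[k] \mPo [tuple 'X_i ^+ m | i < n] = 'X_[mulm m k] :> {mpoly algC[n]}.
Proof.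
rewrite comp_mpolyX mpolyXE_id; apply: eq_bigr => i _.
by rewrite tnth_mktuple mnmE -exprM mulnC.
Qed.

End Poly.

Theorem mainTheorem2 (n m : nat) (hn : (0 < n)%N) (hm : (0 < m)%N)
    (P : {mpoly algC[n]}) :
  (forall g : 'M[algC]_n, g \in @Gnm n m -> @qs_act n m g P = P) <->
  (exists Q : {mpoly algC[n]},
     quasi_symmetric Q /\ P = Q \mPo [tuple 'X_i ^+ m | i < n]).
Proof.
split.
- move=> H.
  have stepA : forall nu, P@_nu != 0 -> dvall m nu.
    move=> nu nz; case: (boolP (dvall m nu)) => // nd; exfalso.
    have m1 : (1 < m)%N.
      rewrite ltn_neqAle hm andbT; apply/eqP => m1.
      have : dvall m nu by apply/forallP=> i; rewrite -m1 dvd1n.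
      by rewrite (negbTE nd).
    have [z pz] := C_prim_root_exists hm.
    have zm : z ^+ m = 1 := prim_expr_order pz.
    have z1 : z != 1.
      apply/eqP => e; have := prim_order_dvd pz 1.
      by rewrite e expr1n eqxx dvdn1 => /eqP m1'; rewrite m1' in m1.
    have z0 : z != 0.
      apply/eqP => e; move: zm; rewrite e expr0n (gtn_eqF hm) => /eqP.
      by rewrite eq_sym oner_eq0.
    pose d := fun i : 'I_n => if i == Ordinal hn then z else 1.
    have dnz : forall i, d i != 0.
      by move=> i; rewrite /d; case: ifP => _; rewrite ?oner_eq0.
    have dm : forall i, d i ^+ m = 1.
      by move=> i; rewrite /d; case: ifP => _; rewrite ?expr1n.
    have hg := pmx_Gnm 1%g dnz dm.
    have wz : \prod_i d i = z.
      rewrite (bigD1 (Ordinal hn)) //= big1; first by rewrite mulr1 /d eqxx.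
      by move=> i /negbTE; rewrite /d => ->.
    have := coef_act hn P nu hg.
    rewrite (qs_mono_ext _ (sigma_pmx 1%g dnz)).
    rewrite (qs_mono_ext (s2 := id) _ (fun i => perm1 i)) qs_mono_id // H //.
    rewrite wg_pmx // wz cKE (negbTE nd) expr1 => e.
    have : P@_nu * (z - 1) == 0 by rewrite mulrBr mulr1 -e subrr.
    by rewrite mulf_eq0 (negbTE nz) subr_eq0 (negbTE z1).
  have stepB : forall a b, compo a = compo b -> P@_a = P@_b.
    move=> a b e; have [s hs] := qs_mono_match hn e.
    pose d1 := fun _ : 'I_n => (1 : algC).
    have one_nz : forall i, d1 i != 0 by move=> i; rewrite oner_eq0.
    have d1m : forall i, d1 i ^+ m = 1 by move=> i; rewrite expr1n.
    have hg := pmx_Gnm s one_nz d1m.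
    have := coef_act hn P a hg.
    rewrite (qs_mono_ext _ (sigma_pmx s one_nz)) hs H // (wg_pmx s one_nz).
    rewrite big1 //.
    by rewrite expr1n mulr1 => ->.
  pose Q := \sum_(nu <- msupp P) P@_nu *: ('X_[divq m nu] : {mpoly algC[n]}).
  have Qc : forall k, Q@_k = P@_(mulm m k).
    move=> k; rewrite /Q raddf_sum -mexp; apply: eq_big_seq => nu hnu /=.
    rewrite mcoeffZ mcoeffX; congr (_ * _%:R).
    rewrite -(inj_eq (mulm_inj hm)) divqK //; apply: stepA.
    by rewrite -mcoeff_msupp.
  exists Q; split.
    by move=> k1 k2 e; rewrite !Qc; apply: stepB; rewrite !(compo_mulm hm) e.
  rewrite [LHS]mpolyE /Q raddf_sum; apply: eq_big_seq => nu hnu /=.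
  rewrite comp_mpolyZ X_comp divqK //; apply: stepA.
  by rewrite -mcoeff_msupp.
- case=> Q [qQ HP] g hg.
  have Pc : forall x, P@_x = if dvall m x then Q@_(divq m x) else 0.
    move=> x; rewrite HP comp_mpolyEX raddf_sum.
    rewrite (eq_bigr (fun k => Q@_k * (mulm m k == x)%:R)); last first.
      by move=> k _; rewrite /= X_comp mcoeffZ mcoeffX.
    case: ifP => hx.
      rewrite -mexp; apply: eq_bigr => k _; congr (_ * _%:R).
      by rewrite -{1}(divqK hx) (inj_eq (mulm_inj hm)).
    rewrite big1 // => k _; case: (eqVneq (mulm m k) x) => [e|_].
      by move: hx; rewrite -e dvall_mulm.
    by rewrite mulr0.
  have sinj := Gnm_sigma_inj hg.
  apply/mpolyP => mu.
  have [nu <-] := qs_mono_surj hn sinj mu.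
  rewrite (coef_act hn P nu hg) !Pc.
  have dv : dvall m (qs_mono (sigma_g g) nu) = dvall m nu.
    by rewrite !dvall_compo (compo_qs_mono hn sinj).
  rewrite dv cKE; case: ifP => hd; last by rewrite mul0r.
  rewrite expr0 mulr1; apply: qQ.
  by rewrite !(compo_divq hm) ?dv // (compo_qs_mono hn sinj).
Qed.
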